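(* Let $f:(0,\infty)\to(0,\infty)$ be a $C^\infty(0,\infty)$-function such that $f'$ is a Bernstein function and $f^{(n)}(x)\neq0$ for all $x>0$ and $n\in\mathbb{N}$. Then its inverse $f^{-1}$ is a Bernstein function with $(f^{-1})^{(n)}(x)\neq0$ for all $x>0$ and $n\in\mathbb{N}$.
   Context: A Bernstein function is a non-negative function $g$ of class $C^\infty(0,\infty)$ with $(-1)^{n-1}g^{(n)}(x)\ge0$ for all $n\in\mathbb{N}$ and $x>0$. (Under the hypotheses $f'>0$, so $f$ is strictly increasing and invertible onto its image.) *)

(* Defs.v *)
From mathcomp Require Import all_boot all_order all_algebra.
From mathcomp Require Import all_classical all_reals all_analysis.
Set Implicit Arguments. Unset Strict Implicit. Unset Printing Implicit Defensive.
Import Order.TTheory GRing.Theory Num.Theory.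
Local Open Scope classical_set_scope.
Local Open Scope ring_scope.

Definition smooth_on {R : realType} (A : set R) (g : R -> R) : Prop :=
  forall (n : nat) (x : R), A x -> derivable (derive1n n g) x 1.

Definition bernstein_on {R : realType} (A : set R) (g : R -> R) : Prop :=
  [/\ smooth_on A g,
      (forall x, A x -> 0 <= g x) &
      (forall (n : nat) x, (0 < n)%N -> A x ->
          0 <= (-1) ^+ n.-1 * derive1n n g x)].

Definition bernstein {R : realType} (g : R -> R) : Prop :=
  bernstein_on `]0, +oo[%classic g.

(* Main.v *)
Require Import Defs.
From mathcomp Require Import all_boot all_order all_algebra.
From mathcomp Require Import all_classical all_reals all_analysis.
From mathcomp Require Import ring lra.
Import Order.TTheory GRing.Theory Num.Theory.
Import numFieldNormedType.Exports.
Local Open Scope classical_set_scope.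
Local Open Scope ring_scope.

Set Implicit Arguments. Unset Strict Implicit.
Section S.
Variable R : realType.
Implicit Types (U V : set R) (u v : R -> R).

Lemma nearU U (x : R) : open U -> U x -> \forall y \near x, U y.
Proof. by move=> oU Ux; apply: open_nbhs_nbhs. Qed.

Lemma eqU_derive1 U u v : open U -> (forall x, U x -> u x = v x) ->
  forall x, U x -> (derive1 u) x = (derive1 v) x.
Proof.
move=> oU e x Ux; rewrite !derive1E; apply: near_eq_derive.
by near=> y; apply: e; near: y; apply: nearU.
Unshelve. all: by end_near. Qed.

Lemma eqU_derivable U u v : open U -> (forall x, U x -> u x = v x) ->
  forall x, U x -> derivable u x 1 -> derivable v x 1.
Proof.
move=> oU e x Ux; apply: near_eq_derivable.
by near=> y; apply: e; near: y; apply: nearU.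
Unshelve. all: by end_near. Qed.

Lemma eqU_derive1n U u v n : open U -> (forall x, U x -> u x = v x) ->
  forall x, U x -> (derive1n n u) x = (derive1n n v) x.
Proof.
move=> oU e; elim: n => [|n IH] x Ux; first by rewrite !derive1n0; apply: e.
rewrite !derive1nS. exact: (@eqU_derive1 U (derive1n n u) (derive1n n v) oU IH x Ux). Qed.

Definition DU U n u := forall k x, (k <= n)%N -> U x -> derivable ((derive1n k u)) x 1.

Lemma DU_add U n u v : open U -> DU U n u -> DU U n v ->
  DU U n (u + v) /\ forall k x, (k <= n.+1)%N -> U x ->
     (derive1n k (u + v)) x = (derive1n k u) x + (derive1n k v) x.
Proof.
move=> oU du dv.
have E : forall k x, (k <= n.+1)%N -> U x -> (derive1n k (u + v)) x = (derive1n k u) x + (derive1n k v) x.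
  elim=> [|k IH] x kn Ux; first by rewrite !derive1n0.
  rewrite !derive1nS (@eqU_derive1 U _ ((derive1n k u) + (derive1n k v)) oU _ x Ux); last first.
    by move=> y Uy; apply: IH => //; apply: ltnW.
  by rewrite !derive1E deriveD //; [apply: du | apply: dv].
split; last exact: E.
move=> k x kn Ux.
apply: (@eqU_derivable U ((derive1n k u) + (derive1n k v)) _ oU) => //.
  by move=> y Uy; rewrite E //; apply: leqW.
by apply: derivableD; [apply: du | apply: dv].
Qed.


Lemma derive1M' u v x : derivable u x 1 -> derivable v x 1 ->
  derive1 (u * v) x = derive1 u x * v x + u x * derive1 v x.
Proof.
move=> du dv; rewrite !derive1E (deriveM du dv) /= addrC mulrC.
by congr (_ + _); rewrite mulrC.
Qed.

Lemma DU_shift U n u : DU U n.+1 u -> DU U n (derive1 u).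
Proof. by move=> d k x kn Ux; rewrite -derive1Sn; apply: d. Qed.

Lemma DU_le U m n u : (m <= n)%N -> DU U n u -> DU U m u.
Proof. by move=> mn d k x km Ux; apply: d => //; apply: leq_trans mn. Qed.

Lemma DU_mul U n u v : open U -> DU U n u -> DU U n v -> DU U n (u * v).
Proof.
move=> oU; elim: n u v => [|n IH] u v du dv [|k] x kn Ux.
- by rewrite derive1n0; apply: derivableM; [apply: (du 0%N) | apply: (dv 0%N)].
- by [].
- by rewrite derive1n0; apply: derivableM; [apply: (du 0%N) | apply: (dv 0%N)].
rewrite derive1Sn.
have [dw _] := DU_add oU (IH _ _ (DU_shift du) (DU_le (leqnSn n) dv))
                        (IH _ _ (DU_le (leqnSn n) du) (DU_shift dv)).
apply: (@eqU_derivable U (derive1n k (derive1 u * v + u * derive1 v)) _ oU) => //; last first.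
  by apply: dw.
apply: eqU_derive1n => // y Uy; rewrite derive1M' //.
  by apply: (du 0%N).
by apply: (dv 0%N).
Qed.


Lemma derivable_comp' (phi psi : R -> R) x :
  derivable psi x 1 -> derivable phi (psi x) 1 -> derivable (phi \o psi) x 1.
Proof.
move=> /derivableP a /derivableP b.
by have [] := is_derive1_comp b a.
Qed.

Lemma derive1_comp' (phi psi : R -> R) x :
  derivable psi x 1 -> derivable phi (psi x) 1 ->
  derive1 (phi \o psi) x = (derive1 phi \o psi) x * derive1 psi x.
Proof. by move=> a b; rewrite (derive1_comp a b). Qed.

Definition SM U u := forall n x, U x -> derivable (derive1n n u) x 1.

Lemma SM_DU U u n : SM U u -> DU U n u.
Proof. by move=> s k x _ Ux; apply: s. Qed.

Lemma SM_shift U u : SM U u -> SM U (derive1 u).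
Proof. by move=> s k x Ux; rewrite -derive1Sn; apply: s. Qed.

Lemma DU_comp U V n (phi psi : R -> R) : open U ->
  (forall x, U x -> V (psi x)) -> SM V phi -> DU U n psi -> DU U n (phi \o psi).
Proof.
move=> oU UV; elim: n phi => [|n IH] phi sp dp [|k] x kn Ux.
- rewrite derive1n0; apply: derivable_comp'; first by apply: (dp 0%N).
  by apply: (sp 0%N); apply: UV.
- by [].
- rewrite derive1n0; apply: derivable_comp'; first by apply: (dp 0%N).
  by apply: (sp 0%N); apply: UV.
rewrite derive1Sn.
have dw := DU_mul oU (IH _ (SM_shift sp) (DU_le (leqnSn n) dp)) (DU_shift dp).
apply: (@eqU_derivable U (derive1n k ((derive1 phi \o psi) * derive1 psi)) _ oU) => //; last first.
  by apply: dw.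
apply: eqU_derive1n => // y Uy; rewrite derive1_comp' //.
  by apply: (dp 0%N).
by apply: (sp 0%N); apply: UV.
Qed.

Lemma SM_mul U u v : open U -> SM U u -> SM U v -> SM U (u * v).
Proof.
move=> oU su sv n x Ux; exact: (@DU_mul U n u v oU (SM_DU (n:=n) su) (SM_DU (n:=n) sv) n x (leqnn n) Ux).
Qed.

Lemma SM_comp U V (phi psi : R -> R) : open U ->
  (forall x, U x -> V (psi x)) -> SM V phi -> SM U psi -> SM U (phi \o psi).
Proof.
move=> oU UV sp sq n x Ux.
exact: (@DU_comp U V n phi psi oU UV sp (SM_DU (n:=n) sq) n x (leqnn n) Ux).
Qed.

Definition SG U (c : R) n u := forall x, U x -> 0 < c * (-1) ^+ n * derive1n n u x.

Lemma SG_mul U n : open U -> forall u v a b, SM U u -> SM U v ->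
  (forall k, (k <= n)%N -> SG U a k u) -> (forall k, (k <= n)%N -> SG U b k v) ->
  SG U (a * b) n (u * v).
Proof.
move=> oU; elim: n => [|n IH] u v a b su sv hu hv x Ux.
  have h1 := hu 0%N (leqnn _) x Ux; have h2 := hv 0%N (leqnn _) x Ux.
  rewrite !derive1n0 !expr0 !mulr1 in h1 h2 *.
  have := mulr_gt0 h1 h2.
  by rewrite (_ : a * u x * (b * v x) = a * b * (u * v) x) // fctE; ring.
have [_ E] := DU_add oU (SM_DU (n:=n) (SM_mul oU (SM_shift su) sv))
                        (SM_DU (n:=n) (SM_mul oU su (SM_shift sv))).
rewrite derive1Sn.
rewrite (@eqU_derive1n U _ (derive1 u * v + u * derive1 v) n oU _ x Ux); last first.
  move=> y Uy; rewrite derive1M' //.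
    by apply: (su 0%N).
  by apply: (sv 0%N).
rewrite E //.
have H1 : SG U (- a * b) n (derive1 u * v).
  apply: IH => //; first exact: SM_shift.
    move=> k kn y Uy; rewrite -derive1Sn.
    have := hu k.+1 kn y Uy; rewrite exprS.
    by rewrite (_ : a * (-1 * (-1) ^+ k) = - a * (-1) ^+ k) //; ring.
  by move=> k kn; apply: hv; apply: leqW.
have H2 : SG U (a * - b) n (u * derive1 v).
  apply: IH => //; first exact: SM_shift.
    by move=> k kn; apply: hu; apply: leqW.
  move=> k kn y Uy; rewrite -derive1Sn.
  have := hv k.+1 kn y Uy; rewrite exprS.
  by rewrite (_ : b * (-1 * (-1) ^+ k) = - b * (-1) ^+ k) //; ring.
have := addr_gt0 (H1 x Ux) (H2 x Ux).
set X := derive1n n _ x; set Y := derive1n n _ x.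
by rewrite exprS (_ : - a * b * (-1) ^+ n * X + a * - b * (-1) ^+ n * Y =
   a * b * (-1 * (-1) ^+ n) * (X + Y)) //; ring.
Qed.

End S.

Section S2.
Variable R : realType.

Lemma der_closed (C : R) (m : nat) (t : R) : t != 0 ->
  derivable (fun s : R => C * (s ^+ m)^-1) t 1 /\
  derive1 (fun s : R => C * (s ^+ m)^-1) t = C * (- (t ^+ m) ^- 2 * (m%:R * t ^+ m.-1)).
Proof.
move=> t0.
have tm0 : (fun s : R => s ^+ m) t != 0 by rewrite /= expf_neq0.
have d1 : derivable (fun s : R => s ^+ m) t 1 := @exprn_derivable R m t 1.
have dV := (@derivableV R R (fun s : R => s ^+ m) t 1 tm0 d1).
have e : (fun s : R => C * (s ^+ m)^-1) = (fun _ => C) * (fun s : R => (s ^+ m)^-1).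
  by apply/funext => s.
split.
  rewrite e. exact: (derivableM (derivable_cst C t 1) dV).
rewrite (@derive1Ml R (fun s : R => (s ^+ m)^-1) t C dV).
congr (_ * _).
rewrite derive1E (@deriveV R R (fun s : R => s ^+ m) t 1 tm0 d1).
rewrite exp_derive /=.
by rewrite /GRing.scale /= mulr1.
Qed.

Definition V0 : set R := `]0, +oo[%classic.

Lemma V0P (x : R) : V0 x <-> 0 < x.
Proof. by rewrite /V0 /= in_itv /= andbT. Qed.

Lemma V0_open : open V0.
Proof. exact: rray_open. Qed.

Lemma inv_formula n (t : R) : V0 t ->
  derive1n n (fun s : R => s^-1) t = (-1) ^+ n * n`!%:R * (t ^+ n.+1)^-1.
Proof.
elim: n t => [|n IH] t Vt.
  by rewrite derive1n0 expr0 mul1r fact0 mul1r expr1.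
have t0 : t != 0 by move/V0P: Vt => /gt_eqF ->.
rewrite derive1nS (@eqU_derive1 R V0 _ (fun s : R => (-1) ^+ n * n`!%:R * (s ^+ n.+1)^-1) V0_open IH t Vt).
have [_ ->] := der_closed ((-1) ^+ n * n`!%:R) n.+1 t0.
rewrite factS natrM /= !exprS.
set X := t ^+ n.
have X0 : X != 0 by rewrite expf_neq0.
field.
by rewrite X0 t0.
Qed.


Lemma sign_sq k : (-1) ^+ k * (-1) ^+ k = 1 :> R.
Proof. by rewrite -exprD addnn -mul2n exprM expr2 mulrNN mulr1 expr1n. Qed.

Lemma inv_SM : SM V0 (fun s : R => s^-1).
Proof.
move=> n t Vt.
have t0 : t != 0 by move/V0P: Vt => /gt_eqF ->.
apply: (@eqU_derivable R V0 (fun s : R => (-1) ^+ n * n`!%:R * (s ^+ n.+1)^-1) _ V0_open) => //.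
  by move=> y Vy; rewrite inv_formula.
by have [] := der_closed ((-1) ^+ n * n`!%:R) n.+1 t0.
Qed.

Lemma inv_SG k : SG V0 1 k (fun s : R => s^-1).
Proof.
move=> t Vt; rewrite inv_formula // mul1r !mulrA sign_sq mul1r.
apply: mulr_gt0; first by rewrite ltr0n fact_gt0.
by rewrite invr_gt0 exprn_gt0 //; apply/V0P.
Qed.


Lemma SG_comp (U V : set R) (psi : R -> R) N : open U ->
  (forall x, U x -> V (psi x)) -> SM U psi ->
  (forall j, (j < N)%N -> SG U 1 j (derive1 psi)) ->
  forall n, (n <= N)%N -> forall c phi, SM V phi -> (forall k, SG V c k phi) ->
  SG U c n (phi \o psi).
Proof.
move=> oU UV sq hq n; elim: n {-2}n (leqnn n) => [|m IH] [|k] km kN c phi sp hp x Ux //.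
- by have := hp 0%N (psi x) (UV x Ux); rewrite !derive1n0.
- by have := hp 0%N (psi x) (UV x Ux); rewrite !derive1n0.
rewrite derive1Sn.
rewrite (@eqU_derive1n R U _ ((derive1 phi \o psi) * derive1 psi) k oU _ x Ux); last first.
  move=> y Uy; rewrite derive1_comp' //.
    by apply: (sq 0%N).
  by apply: (sp 0%N); apply: UV.
have H1 : forall j, (j <= k)%N -> SG U (- c) j (derive1 phi \o psi).
  move=> j jk; apply: IH.
  - exact: leq_trans jk km.
  - by apply: leq_trans (leq_trans jk (leqnSn k)) kN.
  - exact: SM_shift.
  move=> i y Vy; rewrite -derive1Sn.
  have := hp i.+1 y Vy; rewrite exprS.
  by rewrite (_ : c * (-1 * (-1) ^+ i) = - c * (-1) ^+ i) //; ring.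
have H2 : forall j, (j <= k)%N -> SG U 1 j (derive1 psi).
  by move=> j jk; apply: hq; apply: leq_ltn_trans jk kN.
have := SG_mul oU (SM_comp oU UV (SM_shift sp) sq) (SM_shift sq) H1 H2 Ux.
set D := derive1n k _ x.
by rewrite exprS (_ : - c * 1 * (-1) ^+ k * D = c * (-1 * (-1) ^+ k) * D) //; ring.
Qed.

End S2.

Unset Implicit Arguments. Set Strict Implicit.

Theorem lemma4p1 (R : realType) (f g : R -> R) :
  (forall x : R, 0 < x -> 0 < f x) ->
  smooth_on `]0, +oo[%classic f ->
  bernstein (derive1 f) ->
  (forall (n : nat) (x : R), 0 < x -> derive1n n f x != 0) ->
  (* g is the inverse of f (on the image of (0,oo) under f) *)
  (forall x : R, 0 < x -> g (f x) = x) ->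
  bernstein_on (f @` `]0, +oo[%classic) g /\
  (forall (n : nat) (y : R), (f @` `]0, +oo[%classic) y -> derive1n n g y != 0).
Proof.
move=> fpos sf [_ f'nn f'sg] nz gf.
have smf : SM (@V0 R) f := sf.
have fp : forall x, @V0 R x -> 0 < derive1 f x.
  move=> x Vx; have x0 := (V0P x).1 Vx.
  have n2 := f'nn x Vx; have := nz 1%N x x0; rewrite derive1n1 => n1.
  by rewrite lt_def n1 n2.
have f2 : forall k, SG (@V0 R) 1 k (derive1 (derive1 f)).
  move=> k x Vx; have x0 := (V0P x).1 Vx.
  have h : 0 <= (-1) ^+ k * derive1n k (derive1 (derive1 f)) x.
    by have := f'sg k.+1 x isT Vx; rewrite derive1Sn.
  rewrite mul1r.
  rewrite lt_def h andbT mulf_neq0 //.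
    by rewrite expf_neq0 // oppr_eq0 oner_eq0.
  by have := nz k.+2 x x0; rewrite !derive1Sn.
have fpV : forall x, @V0 R x -> @V0 R (derive1 f x).
  by move=> x Vx; apply/V0P; apply: fp.
pose h := (fun s : R => s^-1) \o derive1 f.
have smh : SM (@V0 R) h := SM_comp (V := @V0 R) (@V0_open R) fpV (@inv_SM R) (SM_shift smf).
have sgh : forall k, SG (@V0 R) 1 k h.
  move=> k; exact: (SG_comp (V := @V0 R) (@V0_open R) fpV (SM_shift smf) (N := k)
     (fun j _ => f2 j) (leqnn k) (@inv_SM R) (@inv_SG R)).
set J := f @` `]0, +oo[%classic.
have gV : forall y, J y -> @V0 R (g y).
  by move=> y [x Vx <-]; rewrite gf //; apply/V0P.
have c12 : forall x, @V0 R x -> {near x, cancel f g} /\ {near x, continuous f}.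
  move=> x Vx; have nV := nearU (@V0_open R) Vx; split.
    near=> y; apply: gf; apply/V0P; near: y; exact: nV.
  near=> y; have Vy : @V0 R y by near: y.
  apply: differentiable_continuous; apply/derivable1_diffP.
  by have := sf 0%N y Vy; rewrite derive1n0.
have inv_der : forall x, @V0 R x -> is_derive (f x) 1 g (derive1 f x)^-1.
  move=> x Vx; have [c1 c2] := c12 x Vx.
  apply: is_derive_inverse => //.
    rewrite derive1E; apply: derivableP.
    by have := sf 0%N x Vx; rewrite derive1n0.
  by rewrite gt_eqF // fp.
have gder : forall y, J y -> derivable g y 1 /\ derive1 g y = h (g y).
  move=> y [x Vx <-]; case: (inv_der x Vx) => d e; split => //.
  by rewrite derive1E e /h /= gf //; apply/V0P.
have oJ : open J.
  rewrite openE => _ [x Vx <-]; rewrite /interior.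
  have [c1 c2] := c12 x Vx.
  have [cg cgf] := near_can_continuousAcan_sym c1 c2.
  have gc : {for f x, continuous g} := nbhs_singleton cg.
  have nV : nbhs (g (f x)) (@V0 R) by rewrite gf; [exact: nearU (@V0_open R) Vx | apply/V0P].
  have := gc _ nV => nV'.
  near=> y; exists (g y).
    by near: y; exact: nV'.
  by near: y; exact: cgf.
have smg : SM J g.
  suff D : forall n, DU J n g by move=> n y Jy; exact: (D n n y (leqnn n) Jy).
  elim=> [|n IH] [|k] y kn Jy //.
  - by rewrite derive1n0; case: (gder y Jy).
  - by rewrite derive1n0; case: (gder y Jy).
  rewrite derive1Sn.
  apply: (@eqU_derivable R J (derive1n k (h \o g)) _ oJ) => //.
    move=> z Jz; apply: (@eqU_derive1n R J (h \o g) (derive1 g) k oJ _ z Jz) => w Jw.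
    by case: (gder w Jw) => _ ->.
  exact: (DU_comp (V:=@V0 R) oJ gV smh IH kn Jy).
have sgg : forall n j, (j < n)%N -> SG J 1 j (derive1 g).
  elim=> [|n IH] j jn //.
  move=> y Jy.
  rewrite (@eqU_derive1n R J _ (h \o g) j oJ _ y Jy); last first.
    by move=> z Jz; case: (gder z Jz).
  exact: (SG_comp (V:=@V0 R) oJ gV smg (N:=j)
     (fun i ij => IH i (leq_trans ij jn)) (leqnn j) smh sgh Jy).
split.
  split => //.
    move=> y [x Vx <-]; rewrite gf; last exact/V0P.
    by apply/ltW/V0P.
  move=> [|n] y // _ Jy.
  have := sgg n.+1 n (ltnSn n) y Jy; rewrite mul1r => H.
  by rewrite derive1Sn; apply: ltW.
move=> [|n] y Jy.
  rewrite derive1n0; case: Jy => x Vx <-; rewrite gf; last exact/V0P.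
  by rewrite gt_eqF //; apply/V0P.
have := sgg n.+1 n (ltnSn n) y Jy; rewrite mul1r => H.
rewrite derive1Sn; apply/eqP => E; move: H; rewrite E mulr0 ltxx.
by [].
Unshelve. all: by end_near.
Qed.
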